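(* Let $f:\mathbb{T}^2\to\mathbb{T}^2$ be an area preserving endomorphism. Then the following are equivalent: (1) $f$ is not transitive; (2) there exist non-empty regular open sets $U,V\subset\mathbb{T}^2$ with $U=\mathbb{T}^2\setminus\overline{V}$ (equivalently $V=\mathbb{T}^2\setminus\overline{U}$) such that $f^{-1}(U)=U$ and $f^{-1}(V)=V$.
   Context: $\mathbb{T}^2=\mathbb{R}^2/\mathbb{Z}^2$ with Haar measure $\lambda$. An endomorphism is a local homeomorphism $f:\mathbb{T}^2\to\mathbb{T}^2$; it is area preserving if $\lambda(f^{-1}(B))=\lambda(B)$ for all Borel $B$. $f$ is transitive if some point has dense forward orbit $\{f^n(x):n\ge0\}$. An open set is regular if it equals the interior of its closure. *)

(* Defs.v *)
From HB Require Import structures.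
From mathcomp Require Import all_boot all_order all_algebra generic_quotient.
From mathcomp Require Import all_classical all_reals all_analysis.
Set Implicit Arguments. Unset Strict Implicit. Unset Printing Implicit Defensive.
Import Order.TTheory GRing.Theory Num.Theory numFieldNormedType.Exports.
Local Open Scope classical_set_scope.
Local Open Scope ring_scope.
Local Open Scope quotient_scope.

Section Torus.
Variable R : realType.

Definition tor_rel (p q : R * R) : bool :=
  (p.1 - q.1 \is a Num.int) && (p.2 - q.2 \is a Num.int).

Lemma tor_rel_refl : reflexive tor_rel.
Proof. by move=> p; rewrite /tor_rel !subrr !rpred0. Qed.

Lemma tor_rel_sym : symmetric tor_rel.
Proof.
by move=> p q; rewrite /tor_rel -(opprB p.1) -(opprB p.2) !rpredN.
Qed.

Lemma tor_rel_trans : transitive tor_rel.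
Proof.
move=> q p r /andP[h1 h2] /andP[h3 h4]; apply/andP; split.
  by rewrite -(subrKA q.1) rpredD.
by rewrite -(subrKA q.2) rpredD.
Qed.

Definition tor_equiv := EquivRel tor_rel tor_rel_refl tor_rel_sym tor_rel_trans.

Definition torus := @quotient_topology (R * R)%type {eq_quot tor_equiv}.
HB.instance Definition _ := Topological.copy torus (@quotient_topology (R * R)%type {eq_quot tor_equiv}).

Definition torus_proj : R * R -> torus := fun p => \pi_torus p.

Definition torus_borel (B : set torus) : Prop := <<s [set U | open U] >> B.

(** Haar measure of T^2: Lebesgue measure of the set of representatives
    in the fundamental domain [0,1[ x [0,1[. *)
Definition haar (B : set torus) : \bar R :=
  ((@lebesgue_measure R) \x (@lebesgue_measure R))%E
    ((torus_proj @^-1` B) `&` (`[0%R, 1%R[%classic `*` `[0%R, 1%R[%classic)).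

End Torus.

Definition local_homeomorphism (T : topologicalType) (f : T -> T) : Prop :=
  forall x, exists U : set T,
    open U /\ U x /\ open (f @` U) /\ set_inj U f /\
    {within U, continuous f} /\
    (forall W, W `<=` U -> open W -> open (f @` W)).

Definition area_preserving (R : realType) (f : torus R -> torus R) : Prop :=
  forall B, torus_borel B -> haar (f @^-1` B) = haar B.

Definition transitive_map (T : topologicalType) (f : T -> T) : Prop :=
  exists x, dense (range (fun n : nat => iter n f x)).

(* Main.v *)
Require Import Defs.
From HB Require Import structures.
From mathcomp Require Import all_boot all_order all_algebra generic_quotient.
From mathcomp Require Import all_classical all_reals all_analysis.
Set Implicit Arguments. Unset Strict Implicit. Unset Printing Implicit Defensive.
Import Order.TTheory GRing.Theory Num.Theory numFieldNormedType.Exports.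
Local Open Scope classical_set_scope.
Local Open Scope ring_scope.
Local Open Scope quotient_scope.
Section Complete.
Variable R : realType.
Let RR : normedModType R := (R * R)%type.

Lemma prodR_complete (F : set_system RR) :
  ProperFilter F -> cauchy F -> cvg F.
Proof.
move=> FF /cauchyP Fc.
have c1 : cvg (fst @ F).
  apply: cauchy_cvg; apply: cauchy_exP => e e0.
  have [x Fx] := Fc e e0; exists x.1.
  apply: (@filterS _ F _ (ball x e)) Fx => -[y1 y2] [] //.
have c2 : cvg (snd @ F).
  apply: cauchy_cvg; apply: cauchy_exP => e e0.
  have [x Fx] := Fc e e0; exists x.2.
  apply: (@filterS _ F _ (ball x e)) Fx => -[y1 y2] [] //.
apply/cvg_ex; exists (lim (fst @ F), lim (snd @ F)).
move=> A hA; have := cvg_pair c1 c2 hA.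
move=> /(_ _ _ _); rewrite /= nbhs_filterE.
by apply: (@filterS _ F) => -[? ?].
Qed.

End Complete.
Definition R2 (R : realType) := (R * R)%type.
HB.instance Definition _ (R : realType) := NormedModule.copy (R2 R) (R * R)%type.
HB.instance Definition _ (R : realType) := Uniform_isComplete.Build (R2 R) (@prodR_complete R).
Lemma R2_open (R : realType) (A : set (R * R)) : @open (R2 R) A = open A.
Proof. by []. Qed.
Section S. Variable R : realType.
Local Notation pi := (@torus_proj R).
Lemma pi_eq p q : pi p = pi q <-> tor_rel p q.
Proof.
rewrite /torus_proj.
have := @eqquotP _ _ {eq_quot (tor_equiv R)} p q.
move=> h; split => [e|/h //]. apply/h. exact: e.
Qed.
Lemma ballRR (x y : R * R) e : ball x e y <-> `|x.1 - y.1| < e /\ `|x.2 - y.2| < e.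
Proof. by []. Qed.
Lemma pi_box p : exists q : R * R, pi q = pi p /\ (0 <= q.1 < 1) /\ (0 <= q.2 < 1).
Proof.
exists (p.1 - (Num.floor p.1)%:~R, p.2 - (Num.floor p.2)%:~R); split.
  apply/pi_eq; rewrite /tor_rel /=.
  rewrite (addrAC p.1) (addrAC p.2) !subrr !sub0r !rpredN.
  by rewrite !intr_int.
by rewrite /= !subr_ge0 !floor_le /= !ltrBlDl -!intrD1 !floorD1_gt.
Qed.

Lemma openRR (A : set (R * R)) :
  open A <-> forall x, A x -> exists2 e : R, 0 < e & ball x e `<=` A.
Proof.
rewrite openE; split => h x /h.
  by move=> /nbhs_ballP[e e0 he]; exists e.
by move=> [e e0 he]; apply/nbhs_ballP; exists e.
Qed.

Lemma tor_rel_int (p q : R * R) : tor_rel p q -> (p.1 - q.1 \is a Num.int) /\ (p.2 - q.2 \is a Num.int).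
Proof. by move=> /andP. Qed.

Lemma pi_open (A : set (R * R)) : open A -> open (pi @` A).
Proof.
move=> /openRR oA; apply/openRR => x [a Aa] /pi_eq /tor_rel_int [h1 h2].
have [e e0 he] := oA a Aa; exists e => // y /ballRR [y1 y2].
exists (a.1 + (y.1 - x.1), a.2 + (y.2 - x.2)).
  apply: he; apply/ballRR => /=.
  by rewrite !opprD !addNKr !opprK ![- _ + _]addrC.
change (pi (a.1 + (y.1 - x.1), a.2 + (y.2 - x.2)) = pi y).
apply/pi_eq; apply/andP; split => /=.
  by rewrite (addrC y.1) addrA addrK.

by rewrite (addrC y.2) addrA addrK.
Qed.

Definition bset (k : nat) : set (R * R) :=
  match @unpickle (rat * rat * nat)%type k with
  | Some (q1, q2, m) => ball ((ratr q1 : R), (ratr q2 : R)) (m.+1%:R^-1 : R)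
  | None => setT end.

Lemma bset_open k : open (bset k).
Proof. rewrite /bset; case: unpickle => [[[q1 q2] m]|]; [exact: ball_open|exact: openT]. Qed.

Lemma bset_n0 k : bset k !=set0.
Proof.
rewrite /bset; case: unpickle => [[[q1 q2] m]|]; last by exists point.
exists (ratr q1, ratr q2); apply/ballRR; rewrite /= !subrr normr0 invr_gt0 ltr0n //.
Qed.

Lemma bsetE (q1 q2 : rat) (m : nat) :
  bset (pickle (q1, q2, m)) = ball ((ratr q1 : R), (ratr q2 : R)) (m.+1%:R^-1 : R).
Proof. by rewrite /bset pickleK. Qed.

Lemma rat_near (x r : R) : 0 < r -> exists q : rat, `|x - ratr q| < r.
Proof.
move=> r0; have [y [hy [q _ qy]]] := @dense_rat R (ball x r) (ex_intro _ x (ballxx x r0)) (ball_open x r).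
by exists q; rewrite qy.
Qed.

Lemma small_inv (e : R) : 0 < e -> exists m : nat, m.+1%:R^-1 < e.
Proof.
move=> e0; have := near_infty_natSinv_lt (PosNum e0).
rewrite /prop_near1 /nbhs /= /eventually /filter_from /=.
case=> N _ hN; exists N; exact: (hN N (leqnn N)).
Qed.

Lemma bset_base (A : set (R * R)) x : open A -> A x -> exists k, bset k x /\ bset k `<=` A.
Proof.
move=> /openRR oA /oA [e e0 he].
have [m hm] := small_inv (divr_gt0 e0 (ltr0n R 2)).
have r0 : 0 < m.+1%:R^-1 :> R by rewrite invr_gt0 ltr0n.
have [q1 hq1] := rat_near x.1 r0.
have [q2 hq2] := rat_near x.2 r0.
exists (pickle (q1, q2, m)); rewrite bsetE; split.
  by apply/ballRR; split; rewrite /= distrC.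
move=> y /ballRR [/= y1 y2]; apply: he; apply/ballRR; split.
  rewrite (le_lt_trans (ler_distD (ratr q1) _ _)) //.
  by rewrite (splitr e) ltrD // (lt_trans _ hm).
rewrite (le_lt_trans (ler_distD (ratr q2) _ _)) //.
by rewrite (splitr e) ltrD // (lt_trans _ hm).
Qed.
End S.

Section Topo.
Variable T : topologicalType.
Implicit Types (f : T -> T) (A S : set T).

Lemma lh_cont f : local_homeomorphism f -> continuous f.
Proof.
move=> h x; have [U [oU [Ux [_ [_ [hc _]]]]]] := h x.
by move: hc; rewrite continuous_open_subspace // => /(_ x); apply; rewrite inE.
Qed.

Lemma lh_open f : local_homeomorphism f -> forall W, open W -> open (f @` W).
Proof.
move=> h W oW; have [U hU] := choice h.
have -> : f @` W = \bigcup_(x in W) f @` (W `&` U x).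
  apply/seteqP; split => y.
    case=> x Wx <-; exists x => //; exists x => //; split => //.
    by have [_ [+ _]] := hU x.
  by case=> x _ [z [Wz _] <-]; exists z.
apply: bigcup_open => x _; have [oU [_ [_ [_ [_ ho]]]]] := hU x.
by apply: ho; [exact: subIsetr | exact: openI].
Qed.

Definition open_map f := forall W, open W -> open (f @` W).

Lemma pre_closure f S : continuous f -> open_map f ->
  f @^-1` closure S = closure (f @^-1` S).
Proof.
move=> fc fo; apply/seteqP; split => x.
  move=> hx B; rewrite nbhsE => -[N [oN Nx] NB].
  have : nbhs (f x) (f @` N) by apply: open_nbhs_nbhs; split; [exact: fo|exists x].
  move=> /hx [y [Sy [n Nn ny]]]; exists n; split; [by rewrite /= ny | exact: NB].
move=> hx B hB.
have : nbhs x (f @^-1` B) by exact: fc.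
move=> /hx [y [Sy By]]; by exists (f y).
Qed.

Lemma pre_interior f S : continuous f -> open_map f ->
  f @^-1` S° = (f @^-1` S)°.
Proof.
move=> fc fo.
have e : forall A, A° = ~` closure (~` A).
  by move=> A; rewrite -interiorC setCK.
by rewrite e (e (f @^-1` S)) -preimage_setC pre_closure // preimage_setC.
Qed.

Lemma iter_cont f n : continuous f -> continuous (iter n f).
Proof.
move=> fc; elim: n => [|n ih] x /=; first exact: cvg_id.
exact: continuous_comp (ih x) (fc _).
Qed.
End Topo.

Section Meas.
Variable R : realType.
Local Notation pi := (@torus_proj R).
Local Notation mu := ((@lebesgue_measure R) \x (@lebesgue_measure R))%E.
Definition box : set (R * R) := `[0%R, 1%R[%classic `*` `[0%R, 1%R[%classic.

Lemma ball_prodE (a b r : R) : ball (a, b) r = ball a r `*` ball b r.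
Proof. by apply/seteqP; split => -[x y] /=. Qed.

Lemma bset_meas k : measurable (@bset R k).
Proof.
rewrite /bset; case: unpickle => [[[q1 q2] m]|]; last exact: measurableT.
rewrite ball_prodE; apply: measurableX; exact: measurable_realfun.measurable_ball.
Qed.

Lemma open_meas (A : set (R * R)) : open A -> measurable A.
Proof.
move=> oA.
have -> : A = \bigcup_(k in [set k | @bset R k `<=` A]) @bset R k.
  apply/seteqP; split => x.
    by move=> Ax; have [k [bk sk]] := bset_base oA Ax; exists k.
  by case=> k /= sk; apply: sk.
by apply: bigcup_measurable => k _; exact: bset_meas.
Qed.

Lemma box_meas : measurable box.
Proof. by apply: measurableX; exact: measurable_itv. Qed.

Lemma pre_meas (B : set (torus R)) : open B -> measurable (pi @^-1` B `&` box).
Proof. move=> oB; apply: measurableI; [exact: open_meas | exact: box_meas]. Qed.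

Lemma haarE (B : set (torus R)) : haar B = mu (pi @^-1` B `&` box).
Proof. by []. Qed.


Lemma muX (A1 A2 : set R) : measurable A1 -> measurable A2 ->
  mu (A1 `*` A2) = (lebesgue_measure A1 * lebesgue_measure A2)%E.
Proof. move=> m1 m2; exact: product_measure1E. Qed.

Lemma mu_box : mu box = 1%E.
Proof.
rewrite /box muX; try exact: measurable_itv.
by rewrite !lebesgue_measure_itv /= lte_fin ltr01 /= oppr0 adde0 mule1.
Qed.

Lemma mu_le (A B : set (R * R)) : measurable A -> measurable B -> A `<=` B -> (mu A <= mu B)%E.
Proof. by move=> mA mB AB; apply: le_measure; rewrite ?inE. Qed.

Lemma haar_fin (B : set (torus R)) : open B -> (haar B < +oo)%E.
Proof.
move=> oB; rewrite haarE; apply: (le_lt_trans (mu_le (pre_meas oB) box_meas (@subIsetr _ _ _))).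
by rewrite mu_box ltey.
Qed.


Lemma pi_surj (x : torus R) : exists p, pi p = x.
Proof. by exists (repr x); rewrite /torus_proj reprK. Qed.

Lemma leb_itv (a d : R) : 0 < d -> lebesgue_measure (`[a, a + d[%classic : set R) = d%:E.
Proof.
move=> d0; rewrite lebesgue_measure_itv /= lte_fin ltrDl d0 /=.
by rewrite -EFinB addrAC subrr add0r.
Qed.

Lemma haar_pos (O : set (torus R)) : open O -> O !=set0 -> (0 < haar O)%E.
Proof.
move=> oO [x Ox]; have [p0 hp0] := pi_surj x.
have [q [pq [/andP[q10 q11] /andP[q20 q21]]]] := pi_box p0.
have oP : open (pi @^-1` O) := oO.
have Pq : (pi @^-1` O) q by rewrite /= pq hp0.
have [e e0 he] := (openRR _).1 oP q Pq.
set d := Num.min e (Num.min (1 - q.1) (1 - q.2)).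
have d0 : 0 < d by rewrite !lt_min e0 !subr_gt0 q11 q21.
have dle : d <= e by rewrite ge_min lexx.
have d1 : d <= 1 - q.1 by rewrite !ge_min lexx orbT.
have d2 : d <= 1 - q.2 by rewrite !ge_min lexx !orbT.
have sub : `[q.1, q.1 + d[%classic `*` `[q.2, q.2 + d[%classic `<=` pi @^-1` O `&` box.
  move=> [y1 y2] [/= hy1 hy2]; rewrite in_itv /= in hy1; rewrite in_itv /= in hy2.
  move: hy1 hy2 => /andP[a1 b1] /andP[a2 b2].
  split.
    apply: he; apply/ballRR => /=; split.
      rewrite distrC ger0_norm ?subr_ge0 // ltrBlDl.
      by rewrite (lt_le_trans b1) // lerD2l.
    rewrite distrC ger0_norm ?subr_ge0 // ltrBlDl.
    by rewrite (lt_le_trans b2) // lerD2l.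
  split; rewrite /= in_itv /=; apply/andP; split.
  - exact: le_trans a1.
  - by rewrite (lt_le_trans b1) // -lerBrDl.
  - exact: le_trans a2.
  - by rewrite (lt_le_trans b2) // -lerBrDl.
apply: (lt_le_trans _ (mu_le _ (pre_meas oO) sub)); last first.
  by apply: measurableX; exact: measurable_itv.
by rewrite muX ?leb_itv //; try exact: measurable_itv; rewrite -EFinM lte_fin mulr_gt0.
Qed.

Lemma haar_dense (A B : set (torus R)) : open A -> open B -> B `<=` A ->
  haar B = haar A -> A `<=` closure B.
Proof.
move=> oA oB BA hAB x Ax; apply: contrapT => nx.
have : (~` B)° x by rewrite interiorC.
rewrite /interior nbhsE => -[N [oN Nx] NB].
set O := A `&` N.
have oO : open O by exact: openI.
have O0 : O !=set0 by exists x.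
have dis : (pi @^-1` B `&` box) `&` (pi @^-1` O `&` box) = set0.
  apply/seteqP; split => // p [[Bp _] [[_ Np] _]]; exact: (NB _ Np Bp).
have sub : (pi @^-1` B `&` box) `|` (pi @^-1` O `&` box) `<=` pi @^-1` A `&` box.
  move=> p [[Bp bp]|[[Ap _] bp]]; split => //; exact: BA.
have mU : measurable ((pi @^-1` B `&` box) `|` (pi @^-1` O `&` box)).
  by apply: measurableU; exact: pre_meas.
have := mu_le mU (pre_meas oA) sub.
rewrite measureU //; try exact: pre_meas.
rewrite -!haarE -hAB.
have fB : haar B \is a fin_num by rewrite ge0_fin_numE ?measure_ge0 ?haar_fin.
apply/negP; rewrite -ltNge lteDl //; exact: haar_pos.
Qed.

End Meas.

Section Main.
Variable R : realType.
Local Notation pi := (@torus_proj R).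
Implicit Types (f : torus R -> torus R).

Lemma top_trans f : continuous f ->
  (forall U V : set (torus R), open U -> U !=set0 -> open V -> V !=set0 ->
     exists n, (iter n f @^-1` U) `&` V !=set0) -> transitive_map f.
Proof.
move=> fc hT.
set S := fun k : nat => \bigcup_n (iter n f @^-1` (pi @` @bset R k)).
have oS : forall k, open (S k).
  move=> k; apply: bigcup_open => n _.
  have := (continuousP _).1 (iter_cont (n:=n) fc) _ (pi_open (@bset_open R k)); exact.
pose G := fun k : nat => (pi @^-1` S k : set (R2 R)).
have hG : forall k, open (G k) /\ dense (G k).
  move=> k; split; first exact: (oS k).
  move=> O [z0 Oz0] oO.
  have [b bb] := @bset_n0 R k.
  have [n [t [hn [z1 Oz1 tz1]]]] := hT _ _ (pi_open (@bset_open R k)) (ex_intro _ (pi b) (ex_intro2 _ _ b bb erefl)) (pi_open oO) (ex_intro _ (pi z0) (ex_intro2 _ _ z0 Oz0 erefl)).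
  exists z1; split => //; exists n => //=; by rewrite tz1.
have [p [_ Gp]] := Baire hG (ex_intro _ point I) openT.
exists (pi p) => O [y Oy] oO.
have [q qy] := pi_surj y.
have oP : open (pi @^-1` O) := oO.
have Pq : (pi @^-1` O) q by rewrite /= qy.
have [k [_ kO]] := bset_base oP Pq.
have [n _ [z bz hz]] := Gp k I.
exists (iter n f (pi p)); split; last by exists n.
by rewrite -hz; exact: kO.
Qed.

Lemma iter_inv (T : Type) (g : T -> T) (P : set T) : g @^-1` P = P ->
  forall n y, P (iter n g y) <-> P y.
Proof.
move=> hP; elim=> [//|n ih] y; rewrite iterSr ih.
by rewrite -{2}hP.
Qed.

Lemma not_trans_split f : continuous f -> ~ transitive_map f ->
  exists U0 V0 : set (torus R), [/\ open U0, U0 !=set0, open V0, V0 !=set0 &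
     forall n, (iter n f @^-1` U0) `&` V0 = set0].
Proof.
move=> fc nt; apply: contrapT => h; apply: nt; apply: top_trans fc _.
move=> U V oU U0 oV V0; apply: contrapT => hn; apply: h; exists U, V; split => // n.
apply: contrapT => /eqP/set0P ne; apply: hn; by exists n.
Qed.
End Main.

Unset Implicit Arguments.
Theorem proposition1 (R : realType) (f : torus R -> torus R) :
  local_homeomorphism f -> area_preserving f ->
  (~ transitive_map f <->
   exists U V : set (torus R),
     [/\ open U /\ regopen U /\ U !=set0,
         open V /\ regopen V /\ V !=set0,
         U = ~` closure V,
         f @^-1` U = U & f @^-1` V = V]).
Proof.
move=> hlh hap; have fc := lh_cont hlh; have fo : open_map f := lh_open hlh.
split; last first.
  move=> [U [V [[oU [rU U0]] [oV [rV V0]] UV fU fV]]] [x dx].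
  have [y [Uy [n _ ny]]] := dx U U0 oU.
  have [z [Vz [m _ mz]]] := dx V V0 oV.
  have Ux : U x by rewrite -(iter_inv fU n) ny.
  have Vx : V x by rewrite -(iter_inv fV m) mz.
  by move: Ux; rewrite UV /=; apply; exact: subset_closure.
move=> nt; have [U0 [V0 [oU0 U00 oV0 V00 hUV]]] := not_trans_split fc nt.
set W := \bigcup_n (iter n f @^-1` U0).
have oW : open W.
  apply: bigcup_open => n _.
  by have := (continuousP _).1 (iter_cont (n:=n) fc) _ oU0; exact.
have WV : W `&` V0 = set0.
  apply/seteqP; split => // y [[n _ hn] Vy].
  by rewrite -(hUV n); split.
have fW : f @^-1` W `<=` W.
  move=> y [n _ hn]; exists n.+1 => //; change (U0 (iter n.+1 f y)); rewrite iterSr; exact: hn.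
have ofW : open (f @^-1` W) by exact: (continuousP _).1 fc _ oW.
have hmeas : haar (f @^-1` W) = haar W.
  by apply: hap; apply: sub_sigma_algebra.
have cW : closure (f @^-1` W) = closure W.
  apply/seteqP; split; first exact: closureS.
  have := haar_dense oW ofW fW hmeas => /closureS.
  by rewrite -((closure_id _).1 (@closed_closure _ (f @^-1` W))).
set A := (closure W)°.
have rA : regopen A by exact: interior_closure_idem.
have oA : open A by exact: open_interior.
have WA : W `<=` A.
  move=> y Wy; apply: (interiorS (@subset_closure _ W)).
  by rewrite ((interior_id W).1 oW).
have cA : closure A = closure W.
  apply/seteqP; split; last exact: closureS.
  apply: subset_trans (closureS (@interior_subset _ _)) _.
  by rewrite -((closure_id _).1 (@closed_closure _ W)).
set B := ~` closure A.
have oB : open B by rewrite /B openC; exact: closed_closure.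
have cB : closure B = ~` A by rewrite /B closure_setC rA.
have fA : f @^-1` A = A by rewrite /A pre_interior // pre_closure // cW.
exists A, B; split.
- split => //; split => //.
  by case: U00 => u Uu; exists u; apply: WA; exists 0%N.
- split => //; split.
    by rewrite /regopen cB interiorC.
  case: V00 => v Vv; exists v; rewrite /B cA => cv.
  have := cv V0 (open_nbhs_nbhs (conj oV0 Vv)).
  by rewrite WV => -[].
- by rewrite cB setCK.
- exact: fA.
- by rewrite /B -preimage_setC pre_closure // fA.
Qed.
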